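(* Suppose that $\xi,\eta:G_+\rightarrow G_-$ are two group homomorphisms, and that $r:G_+\times G_+\rightarrow \mathbf{R}^{>0}$ is a function such that for all $u,v,w\in G_+$: $$\,^v\xi(u) = \xi(^{\eta(v)}u),\qquad \eta(v)^u = \eta(v^{\xi(u)}),$$ $$r(uw,v) = r(u,v)\,r(w,v^{\xi(u)}),\qquad r(u,wv) = r(u,v)\,r(^{\eta(v)}u,w).$$ Then $$R=\sum_{u,v\in G_+}r(u,v)\,\{u\left(\eta(v)^{u}\right)^{-1}\}\otimes \{v\xi(u)\}\in H(G;G_+,G_-)\otimes H(G;G_+,G_-)$$ satisfies $(\Delta \otimes id)R = R_{13}R_{23}$ and $(id \otimes \Delta) R = R_{13}R_{12}$. Conversely, if $R\in H(G;G_+,G_-)\otimes H(G;G_+,G_-)$ is invertible, positive, satisfies $(\Delta \otimes id)R = R_{13}R_{23}$ and $(id \otimes \Delta) R = R_{13}R_{12}$, and $R^{-1}$ is also positive, then there exist group homomorphisms $\xi,\eta:G_+\to G_-$ and a function $r:G_+\times G_+\to\mathbf{R}^{>0}$ satisfying the four identities above such that $R=\sum_{u,v\in G_+}r(u,v)\,\{u\left(\eta(v)^{u}\right)^{-1}\}\otimes \{v\xi(u)\}$.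
   Context: $G$ is a finite group with a unique factorization $G=G_+G_-$ (subgroups $G_+,G_-$ such that every $g\in G$ is uniquely $g=g_+g_-$ with $g_\pm\in G_\pm$; also uniquely $g=\bar g_-\bar g_+$). The induced mutual actions are defined by $g_+g_-=\left(^{g_+}g_-\right)\left(g_+^{\,g_-}\right)$ and $g_-g_+=\left(^{g_-}g_+\right)\left(g_-^{\,g_+}\right)$ (left/right actions of $G_+$ and $G_-$ on each other). $H(G;G_+,G_-)$ is the Hopf algebra with basis $\{g\}$, $g\in G$, multiplication $\{g\}\{h\}=\delta_{g_+^{g_-},h_+}\{gh_-\}$, unit $1=\sum_{g_+\in G_+}\{g_+\}$, comultiplication $\Delta\{g\}=\sum_{h_+\in G_+}\{g_+h_+^{-1}(^{h_+}g_-)\}\otimes\{h_+g_-\}$, counit $\epsilon\{g\}=\delta_{g_+,e}$, antipode $S\{g\}=\{g^{-1}\}$. An element of $H\otimes H$ is positive if it is a non-negative linear combination of the $\{g\}\otimes\{h\}$. *)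

(* Defs.v *)
(* G is the whole finite group gT; G+ = Gp, G- = Gm. *)
From HB Require Import structures.
From mathcomp Require Import all_boot all_order all_algebra all_fingroup.
From mathcomp Require Import reals.
Set Implicit Arguments.
Unset Strict Implicit.
Unset Printing Implicit Defensive.
Import GRing.Theory Num.Theory.

Definition uniq_fact (gT : finGroupType) (Gp Gm : {set gT}) : Prop :=
  forall g : gT, exists! p : gT * gT,
    [/\ p.1 \in Gp, p.2 \in Gm & g = (p.1 * p.2)%g].

Definition fplus (gT : finGroupType) (Gp Gm : {set gT}) (g : gT) : gT :=
  odflt 1%g [pick a in Gp | (a^-1 * g)%g \in Gm].
Definition fminus (gT : finGroupType) (Gp Gm : {set gT}) (g : gT) : gT :=
  ((fplus Gp Gm g)^-1 * g)%g.
Definition bplus (gT : finGroupType) (Gp Gm : {set gT}) (g : gT) : gT :=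
  odflt 1%g [pick a in Gp | (g * a^-1)%g \in Gm].
Definition bminus (gT : finGroupType) (Gp Gm : {set gT}) (g : gT) : gT :=
  (g * (bplus Gp Gm g)^-1)%g.

(* Mutual actions: for u in G+, x in G-,
   u x = (^u x)(u^x)   and   x u = (^x u)(x^u). *)
Definition lactPM (gT : finGroupType) (Gp Gm : {set gT}) (u x : gT) : gT :=
  bminus Gp Gm (u * x)%g.
Definition ractMP (gT : finGroupType) (Gp Gm : {set gT}) (u x : gT) : gT :=
  bplus Gp Gm (u * x)%g.
Definition lactMP (gT : finGroupType) (Gp Gm : {set gT}) (x u : gT) : gT :=
  fplus Gp Gm (x * u)%g.
Definition ractPM (gT : finGroupType) (Gp Gm : {set gT}) (x u : gT) : gT :=
  fminus Gp Gm (x * u)%g.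

(* Elements of H, H (x) H, H (x) H (x) H as coefficient functions on the
   basis {g}, {g}(x){h}, {g}(x){h}(x){k}. *)
Definition H2 (gT : finGroupType) (R : realType) := {ffun gT * gT -> R}.
Definition H3 (gT : finGroupType) (R : realType) := {ffun gT * gT * gT -> R}.

(* basis product: {g}{h} = [g+^{g-} == h+] {g h-}; bmul g h k <-> coefficient
   of {k} in {g}{h} is 1 *)
Definition bmul (gT : finGroupType) (Gp Gm : {set gT}) (g h k : gT) : bool :=
  (bplus Gp Gm g == fplus Gp Gm h) && ((g * fminus Gp Gm h)%g == k).

Local Open Scope ring_scope.

(* unit 1 (x) 1 of H (x) H, with 1 = sum_{u in G+} {u} *)
Definition one2 (gT : finGroupType) (R : realType) (Gp : {set gT}) : H2 gT R :=
  [ffun k => ((k.1 \in Gp) && (k.2 \in Gp))%:R].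

Definition mul2 (gT : finGroupType) (R : realType) (Gp Gm : {set gT})
  (A B : H2 gT R) : H2 gT R :=
  [ffun k => \sum_(x : gT * gT) \sum_(y : gT * gT)
     A x * B y * (bmul Gp Gm x.1 y.1 k.1 && bmul Gp Gm x.2 y.2 k.2)%:R].

Definition mul3 (gT : finGroupType) (R : realType) (Gp Gm : {set gT})
  (A B : H3 gT R) : H3 gT R :=
  [ffun k => \sum_(x : gT * gT * gT) \sum_(y : gT * gT * gT)
     A x * B y * [&& bmul Gp Gm x.1.1 y.1.1 k.1.1,
                     bmul Gp Gm x.1.2 y.1.2 k.1.2 &
                     bmul Gp Gm x.2 y.2 k.2]%:R].

(* coefficient of {k1} (x) {k2} in Delta {g}
   = sum_{h in G+} {g+ h^-1 (^h g-)} (x) {h g-} *)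
Definition dcoef (gT : finGroupType) (R : realType) (Gp Gm : {set gT})
  (g k1 k2 : gT) : R :=
  \sum_(h in Gp)
    ((k1 == (fplus Gp Gm g * h^-1 * lactPM Gp Gm h (fminus Gp Gm g))%g)
     && (k2 == (h * fminus Gp Gm g)%g))%:R.

Definition Delta_id (gT : finGroupType) (R : realType) (Gp Gm : {set gT})
  (A : H2 gT R) : H3 gT R :=
  [ffun k => \sum_(x : gT * gT)
     A x * dcoef R Gp Gm x.1 k.1.1 k.1.2 * (x.2 == k.2)%:R].

Definition id_Delta (gT : finGroupType) (R : realType) (Gp Gm : {set gT})
  (A : H2 gT R) : H3 gT R :=
  [ffun k => \sum_(x : gT * gT)
     A x * (x.1 == k.1.1)%:R * dcoef R Gp Gm x.2 k.1.2 k.2].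

Definition leg13 (gT : finGroupType) (R : realType) (Gp : {set gT})
  (A : H2 gT R) : H3 gT R :=
  [ffun k => A (k.1.1, k.2) * (k.1.2 \in Gp)%:R].
Definition leg23 (gT : finGroupType) (R : realType) (Gp : {set gT})
  (A : H2 gT R) : H3 gT R :=
  [ffun k => (k.1.1 \in Gp)%:R * A (k.1.2, k.2)].
Definition leg12 (gT : finGroupType) (R : realType) (Gp : {set gT})
  (A : H2 gT R) : H3 gT R :=
  [ffun k => A k.1 * (k.2 \in Gp)%:R].

Definition positive2 (gT : finGroupType) (R : realType) (A : H2 gT R) : Prop :=
  forall k, 0 <= A k.

Definition Rform (gT : finGroupType) (R : realType) (Gp Gm : {set gT})
  (xi eta : gT -> gT) (r : gT -> gT -> R) : H2 gT R :=
  [ffun k => \sum_(u in Gp) \sum_(v in Gp)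
     r u v * (k == ((u * (ractPM Gp Gm (eta v) u)^-1)%g, (v * xi u)%g))%:R].

Definition compat (gT : finGroupType) (R : realType) (Gp Gm : {set gT})
  (xi eta : gT -> gT) (r : gT -> gT -> R) : Prop :=
  forall u v w, u \in Gp -> v \in Gp -> w \in Gp ->
  [/\ lactPM Gp Gm v (xi u) = xi (lactMP Gp Gm (eta v) u),
      ractPM Gp Gm (eta v) u = eta (ractMP Gp Gm v (xi u)),
      r (u * w)%g v = r u v * r w (ractMP Gp Gm v (xi u)) &
      r u (w * v)%g = r u v * r (lactMP Gp Gm (eta v) u) w].

(* Main.v *)
Require Import Defs.
From HB Require Import structures.
From mathcomp Require Import all_boot all_order all_algebra all_fingroup.
From mathcomp Require Import reals.
From mathcomp Require Import ring.
Import GRing.Theory Num.Theory.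
Import Order.TTheory.
Local Open Scope ring_scope.

Set Implicit Arguments.
Unset Strict Implicit.
Unset Printing Implicit Defensive.

Section Grp.
Variables (gT : finGroupType) (Gp Gm : {group gT}).
Hypothesis UF : uniq_fact Gp Gm.
Local Open Scope group_scope.

Lemma dec_eq a m a' m' : a \in Gp -> m \in Gm -> a' \in Gp -> m' \in Gm ->
  a * m = a' * m' -> a = a' /\ m = m'.
Proof.
move=> Ha Hm Ha' Hm' E.
have [p [_ U]] := UF (a * m).
have e1 := U (a, m) (And3 Ha Hm erefl).
have e2 := U (a', m') (And3 Ha' Hm' E).
by rewrite e1 in e2; case: e2.
Qed.

Lemma capPM x : x \in Gp -> x \in Gm -> x = 1.
Proof.
move=> Hp Hm; have [] := @dec_eq x 1 1 x Hp (group1 _) (group1 _) Hm.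
  by rewrite mulg1 mul1g.
by [].
Qed.

Lemma fplusP g : fplus Gp Gm g \in Gp /\ fminus Gp Gm g \in Gm.
Proof.
rewrite /fminus /fplus; case: pickP => [a /andP[Ha Hm] | Hn] //=.
have [[a m] [[/= Ha Hm E] _]] := UF g.
by have := Hn a; rewrite Ha E mulKg Hm.
Qed.

Lemma fdec g : fplus Gp Gm g * fminus Gp Gm g = g.
Proof. by rewrite /fminus mulVKg. Qed.

Lemma fplus_eq g : g * (fminus Gp Gm g)^-1 = fplus Gp Gm g.
Proof. by rewrite /fminus invMg invgK mulgA mulgV mul1g. Qed.

Lemma fplusG g : fplus Gp Gm g \in Gp. Proof. by case: (fplusP g). Qed.
Lemma fminusG g : fminus Gp Gm g \in Gm. Proof. by case: (fplusP g). Qed.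

Local Hint Resolve fplusG fminusG groupVr group1 : core.
Lemma fM a m : a \in Gp -> m \in Gm ->
  fplus Gp Gm (a * m) = a /\ fminus Gp Gm (a * m) = m.
Proof.
move=> Ha Hm; apply: dec_eq; rewrite ?fplusG ?fminusG //.
by rewrite fdec.
Qed.

Lemma fplusM a m : a \in Gp -> m \in Gm -> fplus Gp Gm (a * m) = a.
Proof. by move=> Ha Hm; case: (fM Ha Hm). Qed.
Lemma fminusM a m : a \in Gp -> m \in Gm -> fminus Gp Gm (a * m) = m.
Proof. by move=> Ha Hm; case: (fM Ha Hm). Qed.
Lemma fplusE a : a \in Gp -> fplus Gp Gm a = a.
Proof. by move=> Ha; rewrite -{1}(mulg1 a) fplusM. Qed.
Lemma fminusE a : a \in Gp -> fminus Gp Gm a = 1.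
Proof. by move=> Ha; rewrite -{1}(mulg1 a) fminusM. Qed.

Lemma bplusP g : bplus Gp Gm g \in Gp /\ bminus Gp Gm g \in Gm.
Proof.
rewrite /bminus /bplus; case: pickP => [a /andP[Ha Hm] | Hn] //=.
have [[a m] [[/= Ha Hm E] _]] := UF g^-1.
have := Hn a^-1; rewrite groupV Ha /= invgK.
have -> : g = m^-1 * a^-1 by rewrite -invgM -E invgK.
by rewrite mulgVK groupV Hm.
Qed.

Lemma bdec g : bminus Gp Gm g * bplus Gp Gm g = g.
Proof. by rewrite /bminus mulgVK. Qed.

Lemma bplusG g : bplus Gp Gm g \in Gp. Proof. by case: (bplusP g). Qed.
Lemma bminusG g : bminus Gp Gm g \in Gm. Proof. by case: (bplusP g). Qed.

Local Hint Resolve bplusG bminusG : core.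
Lemma dec_eq' m a m' a' : a \in Gp -> m \in Gm -> a' \in Gp -> m' \in Gm ->
  m * a = m' * a' -> m = m' /\ a = a'.
Proof.
move=> Ha Hm Ha' Hm' E.
have [] := @dec_eq a^-1 m^-1 a'^-1 m'^-1; rewrite ?groupV //.
  by rewrite -!invgM E.
by move=> /invg_inj -> /invg_inj ->.
Qed.

Lemma bM m a : m \in Gm -> a \in Gp ->
  bminus Gp Gm (m * a) = m /\ bplus Gp Gm (m * a) = a.
Proof.
move=> Hm Ha; apply: dec_eq'; rewrite ?bplusG ?bminusG //.
by rewrite bdec.
Qed.
Lemma bplusM m a : m \in Gm -> a \in Gp -> bplus Gp Gm (m * a) = a.
Proof. by move=> Hm Ha; case: (bM Hm Ha). Qed.
Lemma bminusM m a : m \in Gm -> a \in Gp -> bminus Gp Gm (m * a) = m.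
Proof. by move=> Hm Ha; case: (bM Hm Ha). Qed.
Lemma bplusE a : a \in Gp -> bplus Gp Gm a = a.
Proof. by move=> Ha; rewrite -{1}(mul1g a) bplusM. Qed.
Lemma bplusEm m : m \in Gm -> bplus Gp Gm m = 1.
Proof. by move=> Hm; rewrite -{1}(mulg1 m) bplusM. Qed.

Lemma bplus_inv g :
  bplus Gp Gm (bplus Gp Gm g * (fminus Gp Gm g)^-1) = fplus Gp Gm g.
Proof.
have E : bplus Gp Gm g * (fminus Gp Gm g)^-1 =
         (bminus Gp Gm g)^-1 * fplus Gp Gm g.
  apply: (mulgI (bminus Gp Gm g)); rewrite mulgA bdec mulVKg.
  by rewrite -{1}(fdec g) mulgK.
by rewrite E bplusM ?groupV ?bminusG ?fplusG.
Qed.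

Lemma ractPM_mul y w h : y \in Gm -> w \in Gp -> h \in Gp ->
  ractPM Gp Gm y (w * h) = ractPM Gp Gm (ractPM Gp Gm y w) h.
Proof.
move=> Hy Hw Hh; rewrite /ractPM.
have -> : y * (w * h) = (fplus Gp Gm (y * w) * fplus Gp Gm (fminus Gp Gm (y * w) * h))
   * fminus Gp Gm (fminus Gp Gm (y * w) * h).
  by rewrite -mulgA fdec !mulgA mulgV mul1g.
by rewrite [fminus _ _ (_ * _ * _)]fminusM // groupM.
Qed.

Lemma lact_ract_inv z h : z \in Gm -> h \in Gp ->
  lactPM Gp Gm h (ractPM Gp Gm z h)^-1 = z^-1.
Proof.
move=> Hz Hh; rewrite /lactPM /ractPM.
have -> : h * (fminus Gp Gm (z * h))^-1 = z^-1 * fplus Gp Gm (z * h).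
  apply: (mulgI z); rewrite mulVKg mulgA.
  by rewrite fplus_eq.
by rewrite bminusM ?groupV ?fplusG.
Qed.

Lemma bplus_ract z u : z \in Gm -> u \in Gp ->
  bplus Gp Gm (u * (ractPM Gp Gm z u)^-1) = lactMP Gp Gm z u.
Proof.
move=> Hz Hu; rewrite /lactMP /ractPM.
have -> : u * (fminus Gp Gm (z * u))^-1 = z^-1 * fplus Gp Gm (z * u).
  apply: (mulgI z); rewrite mulVKg mulgA.
  by rewrite fplus_eq.
by rewrite bplusM ?groupV ?fplusG.
Qed.

Lemma ractPM_mulm y z u : y \in Gm -> z \in Gm -> u \in Gp ->
  ractPM Gp Gm (y * z) u =
  ractPM Gp Gm y (lactMP Gp Gm z u) * ractPM Gp Gm z u.
Proof.
move=> Hy Hz Hu; rewrite /ractPM /lactMP.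
have -> : y * z * u = fplus Gp Gm (y * fplus Gp Gm (z * u)) *
     (fminus Gp Gm (y * fplus Gp Gm (z * u)) * fminus Gp Gm (z * u)).
  rewrite (mulgA (fplus Gp Gm (y * fplus Gp Gm (z * u)))) fdec.
  by rewrite -[y * _ * fminus _ _ _]mulgA fdec mulgA.
by rewrite [fminus _ _ (_ * (_ * _))]fminusM // groupM.
Qed.

Lemma ractPM1 y : y \in Gm -> ractPM Gp Gm y 1 = y.
Proof. by move=> Hy; rewrite /ractPM mulg1 -{1}[y]mul1g fminusM. Qed.

Lemma fplus_mulm g m : m \in Gm -> fplus Gp Gm (g * m) = fplus Gp Gm g.
Proof.
move=> Hm; have -> : g * m = fplus Gp Gm g * (fminus Gp Gm g * m) by rewrite /fminus !mulgA mulgV mul1g.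
rewrite fplusM //; exact: groupM.
Qed.

Lemma comp_id x y : x * fminus Gp Gm y \in Gp ->
  fminus Gp Gm y = (fminus Gp Gm x)^-1.
Proof.
move=> Hp.
have E : x * fminus Gp Gm y = fplus Gp Gm x * (fminus Gp Gm x * fminus Gp Gm y).
  by rewrite /fminus !mulgA mulgV mul1g.
have := fminusE Hp; rewrite E fminusM //; last exact: groupM.
by move=> /eqP; rewrite -eq_invg_mul => /eqP <-.
Qed.

Lemma ract_lact_inv h z : h \in Gp -> z \in Gm ->
  ractPM Gp Gm (lactPM Gp Gm h z)^-1 h = z^-1.
Proof.
move=> Hh Hz; rewrite /ractPM /lactPM.
have -> : (bminus Gp Gm (h * z))^-1 * h = bplus Gp Gm (h * z) * z^-1.
  apply: (mulgI (bminus Gp Gm (h * z))); rewrite mulVKg mulgA bdec.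
  by rewrite mulgK.
by rewrite fminusM ?groupV.
Qed.

End Grp.


Section Sums.
Variable R : realType.

Lemma sum_delta (T : finType) (a : T) (F : T -> R) :
  \sum_x F x * (x == a)%:R = F a.
Proof.
rewrite (bigD1 a) //= eqxx mulr1 big1 ?addr0 // => x /negbTE ->.
by rewrite mulr0.
Qed.

Lemma sum_delta_in (T : finType) (A : {pred T}) (a : T) (F : T -> R) :
  a \in A -> \sum_(x in A) F x * (x == a)%:R = F a.
Proof.
move=> Ha; rewrite (bigD1 a) //= eqxx mulr1 big1 ?addr0 // => x /andP[_ /negbTE ->].
by rewrite mulr0.
Qed.

Lemma pair_sum (I J : finType) (F : I * J -> R) :
  \sum_p F p = \sum_a \sum_b F (a, b).
Proof.
transitivity (\sum_p F (p.1, p.2)); first by apply: eq_bigr => -[].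
by rewrite -(pair_bigA _ (fun a b => F (a, b))).
Qed.

Lemma sum3 (T : finType) (F : T * T * T -> R) :
  \sum_x F x = \sum_a \sum_b \sum_c F ((a, b), c).
Proof.
rewrite pair_sum (pair_sum (fun a => \sum_c F (a, c))).
by [].
Qed.

Lemma natr_and3 (a b c : bool) : ([&& a, b & c]%:R : R) = a%:R * b%:R * c%:R.
Proof. by case: a; case: b; case: c; rewrite /= ?mul0r ?mulr0 ?mul1r ?mulr1. Qed.

Lemma natr_and (a b : bool) : ((a && b)%:R : R) = a%:R * b%:R.
Proof. by case: a; case: b; rewrite /= ?mul0r ?mulr0 ?mul1r ?mulr1. Qed.

Lemma natr_pair (T T' : eqType) (x a : T * T') :
  ((x == a)%:R : R) = (x.1 == a.1)%:R * (x.2 == a.2)%:R.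
Proof. by case: x => ? ?; case: a => ? ?; rewrite xpair_eqE natr_and. Qed.

Lemma sum_prod3 (I J K : finType) (f : I -> R) (g : J -> K -> R) :
  \sum_a \sum_b \sum_c f a * g b c = (\sum_a f a) * \sum_b \sum_c g b c.
Proof.
rewrite big_distrl; apply: eq_bigr => a _ /=; rewrite big_distrr.
by apply: eq_bigr => b _; rewrite big_distrr.
Qed.

Lemma sum_delta3 (I J K : finType) (a0 : I) (G : I -> J -> K -> R) :
  \sum_a \sum_b \sum_c G a b c * (a == a0)%:R = \sum_b \sum_c G a0 b c.
Proof.
transitivity (\sum_a (\sum_b \sum_c G a b c) * (a == a0)%:R); last by rewrite sum_delta.
apply: eq_bigr => a _; rewrite big_distrl; apply: eq_bigr => b _.
by rewrite big_distrl.
Qed.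

Lemma sum_delta2 (I J : finType) (a0 : I) (G : I -> J -> R) :
  \sum_a \sum_b G a b * (a == a0)%:R = \sum_b G a0 b.
Proof.
transitivity (\sum_a (\sum_b G a b) * (a == a0)%:R); last by rewrite sum_delta.
by apply: eq_bigr => a _; rewrite big_distrl.
Qed.

Lemma reorder4 (I J K L : finType) (F : I -> J -> K -> L -> R) :
  \sum_a \sum_b \sum_c \sum_d F a b c d = \sum_b \sum_d \sum_c \sum_a F a b c d.
Proof.
rewrite exchange_big; apply: eq_bigr => b _ /=.
rewrite exchange_big /=.
rewrite (eq_bigr (fun c => \sum_d \sum_a F a b c d)); last first.
  by move=> c _; rewrite exchange_big.
by rewrite exchange_big.
Qed.

Lemma sum_prod3' (I J K : finType) (g : I -> J -> R) (f : K -> R) :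
  \sum_a \sum_b \sum_c g a b * f c = (\sum_a \sum_b g a b) * \sum_c f c.
Proof.
rewrite big_distrl; apply: eq_bigr => a _ /=; rewrite big_distrl.
by apply: eq_bigr => b _; rewrite big_distrr.
Qed.

Lemma reorder4' (I J K L : finType) (F : I -> J -> K -> L -> R) :
  \sum_a \sum_b \sum_c \sum_d F a b c d = \sum_a \sum_c \sum_d \sum_b F a b c d.
Proof.
apply: eq_bigr => a _; rewrite exchange_big; apply: eq_bigr => c _ /=.
by rewrite exchange_big.
Qed.

End Sums.

Section Alg.
Variables (gT : finGroupType) (Gp Gm : {group gT}) (R : realType).
Hypothesis UF : uniq_fact Gp Gm.
Local Hint Resolve fplusG fminusG bplusG bminusG groupVr group1 : core.

Lemma bm_sum_r g k :
  \sum_b ((b \in Gp)%:R * (bmul Gp Gm g b k)%:R : R) = (k == g)%:R.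
Proof.
transitivity (\sum_b ((k == g)%:R * (b == bplus Gp Gm g)%:R : R)).
  apply: eq_bigr => b _; rewrite /bmul.
  case: (boolP (b \in Gp)) => Hb; last first.
    have /negbTE-> : b != bplus Gp Gm g by apply/eqP => E; move: Hb; rewrite E bplusG.
    by rewrite /= !mulr0 mul0r.
  by rewrite fplusE // fminusE // mulg1 mul1r natr_and mulrC [b == _]eq_sym [k == _]eq_sym.
rewrite -big_distrr /=.
rewrite (eq_bigr (fun b => 1 * (b == bplus Gp Gm g)%:R)); last by move=> b _; rewrite mul1r.
by rewrite sum_delta mulr1.
Qed.

Lemma bm_sum_l h k :
  \sum_b ((b \in Gp)%:R * (bmul Gp Gm b h k)%:R : R) = (k == h)%:R.
Proof.
transitivity (\sum_b ((k == h)%:R * (b == fplus Gp Gm h)%:R : R)).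
  apply: eq_bigr => b _; rewrite /bmul.
  case: (boolP (b \in Gp)) => Hb; last first.
    have /negbTE-> : b != fplus Gp Gm h by apply/eqP => E; move: Hb; rewrite E fplusG.
    by rewrite /= !mulr0 mul0r.
  rewrite bplusE // mul1r.
  case: (eqVneq b (fplus Gp Gm h)) => [->|ne]; last by rewrite /= !mulr0.
  by rewrite fdec /= mulr1 eq_sym.
rewrite -big_distrr /=.
rewrite (eq_bigr (fun b => 1 * (b == fplus Gp Gm h)%:R)); last by move=> b _; rewrite mul1r.
by rewrite sum_delta mulr1.
Qed.

Lemma mul3_13_23 (A B : H2 gT R) k :
  mul3 Gp Gm (leg13 Gp A) (leg23 Gp B) k =
  \sum_a \sum_b A (k.1.1, a) * B (k.1.2, b) * (bmul Gp Gm a b k.2)%:R.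
Proof.
rewrite ffunE.
transitivity (\sum_x leg13 Gp A x * ((k.1.1 == x.1.1)%:R *
   \sum_b2 \sum_b3 (B (b2, b3) * (bmul Gp Gm x.1.2 b2 k.1.2)%:R
                                * (bmul Gp Gm x.2 b3 k.2)%:R))).
  apply: eq_bigr => x _; rewrite sum3 -(bm_sum_r x.1.1 k.1.1) -sum_prod3 big_distrr /=.
  apply: eq_bigr => y1 _; rewrite big_distrr; apply: eq_bigr => y2 _.
  rewrite big_distrr; apply: eq_bigr => y3 _.
  rewrite [leg23 _ _ _]ffunE natr_and3 /=; ring.
rewrite sum3.
transitivity (\sum_x1 \sum_x2 \sum_x3 (A (x1, x3) * (x2 \in Gp)%:R *
   \sum_b2 \sum_b3 (B (b2, b3) * (bmul Gp Gm x2 b2 k.1.2)%:R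
                                * (bmul Gp Gm x3 b3 k.2)%:R)) * (x1 == k.1.1)%:R).
  apply: eq_bigr => x1 _; apply: eq_bigr => x2 _; apply: eq_bigr => x3 _.
  rewrite ffunE /= [k.1.1 == _]eq_sym; ring.
rewrite sum_delta3.
transitivity (\sum_x2 \sum_x3 \sum_b2 \sum_b3 (((x2 \in Gp)%:R *
   (bmul Gp Gm x2 b2 k.1.2)%:R) * (A (k.1.1, x3) * B (b2, b3) * (bmul Gp Gm x3 b3 k.2)%:R))).
  apply: eq_bigr => x2 _; apply: eq_bigr => x3 _; rewrite big_distrr.
  apply: eq_bigr => b2 _; rewrite big_distrr; apply: eq_bigr => b3 _ /=; ring.
rewrite reorder4; apply: eq_bigr => x3 _; apply: eq_bigr => b3 _.
rewrite (eq_bigr (fun b2 => (\sum_x2 ((x2 \in Gp)%:R * (bmul Gp Gm x2 b2 k.1.2)%:R)) *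
   (A (k.1.1, x3) * B (b2, b3) * (bmul Gp Gm x3 b3 k.2)%:R))); last first.
  by move=> b2 _; rewrite big_distrl.
rewrite (eq_bigr (fun b2 => (A (k.1.1, x3) * B (b2, b3) * (bmul Gp Gm x3 b3 k.2)%:R) *
   (b2 == k.1.2)%:R)); last first.
  by move=> b2 _; rewrite bm_sum_l mulrC eq_sym.
by rewrite sum_delta.
Qed.

Lemma mul3_13_12 (A B : H2 gT R) k :
  mul3 Gp Gm (leg13 Gp A) (leg12 Gp B) k =
  \sum_a \sum_b A (a, k.2) * B (b, k.1.2) * (bmul Gp Gm a b k.1.1)%:R.
Proof.
rewrite ffunE.
transitivity (\sum_x leg13 Gp A x * ((
   \sum_b1 \sum_b2 (B (b1, b2) * (bmul Gp Gm x.1.1 b1 k.1.1)%:R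
                                * (bmul Gp Gm x.1.2 b2 k.1.2)%:R)) * (k.2 == x.2)%:R)).
  apply: eq_bigr => x _; rewrite sum3 -(bm_sum_r x.2 k.2) -sum_prod3' big_distrr /=.
  apply: eq_bigr => y1 _; rewrite big_distrr; apply: eq_bigr => y2 _.
  rewrite big_distrr; apply: eq_bigr => y3 _.
  rewrite [leg12 _ _ _]ffunE natr_and3 /=; ring.
rewrite sum3.
transitivity (\sum_x1 \sum_x2 \sum_x3 (A (x1, x3) * (x2 \in Gp)%:R *
   \sum_b1 \sum_b2 (B (b1, b2) * (bmul Gp Gm x1 b1 k.1.1)%:R
                                * (bmul Gp Gm x2 b2 k.1.2)%:R)) * (x3 == k.2)%:R).
  apply: eq_bigr => x1 _; apply: eq_bigr => x2 _; apply: eq_bigr => x3 _.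
  rewrite ffunE /= [k.2 == _]eq_sym; ring.
under eq_bigr => x1 _ do under eq_bigr => x2 _ do rewrite sum_delta.
transitivity (\sum_x1 \sum_x2 \sum_b1 \sum_b2 (((x2 \in Gp)%:R *
   (bmul Gp Gm x2 b2 k.1.2)%:R) * (A (x1, k.2) * B (b1, b2) * (bmul Gp Gm x1 b1 k.1.1)%:R))).
  apply: eq_bigr => x1 _; apply: eq_bigr => x2 _; rewrite big_distrr.
  apply: eq_bigr => b1 _; rewrite big_distrr; apply: eq_bigr => b2 _ /=; ring.
rewrite reorder4'; apply: eq_bigr => x1 _; apply: eq_bigr => b1 _.
rewrite (eq_bigr (fun b2 => (\sum_x2 ((x2 \in Gp)%:R * (bmul Gp Gm x2 b2 k.1.2)%:R)) *
   (A (x1, k.2) * B (b1, b2) * (bmul Gp Gm x1 b1 k.1.1)%:R))); last first.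
  by move=> b2 _; rewrite big_distrl.
rewrite (eq_bigr (fun b2 => (A (x1, k.2) * B (b1, b2) * (bmul Gp Gm x1 b1 k.1.1)%:R) *
   (b2 == k.1.2)%:R)); last first.
  by move=> b2 _; rewrite bm_sum_l mulrC eq_sym.
by rewrite sum_delta.
Qed.

End Alg.


Section Mono.
Variables (gT : finGroupType) (Gp Gm : {group gT}) (R : realType).
Hypothesis UF : uniq_fact Gp Gm.
Local Hint Resolve fplusG fminusG bplusG bminusG groupVr group1 : core.

Definition Mono (c : gT -> gT -> R) (X Y : gT -> gT -> gT) : H2 gT R :=
  [ffun k => \sum_(u in Gp) \sum_(v in Gp)
     c u v * (k == ((u * X u v)%g, (v * Y u v)%g))%:R].

Definition NF (a : gT -> gT -> gT -> R) (f : gT -> gT -> gT -> gT * gT * gT)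
  (k : gT * gT * gT) : R :=
  \sum_(q1 in Gp) \sum_(q2 in Gp) \sum_(q3 in Gp) a q1 q2 q3 * (k == f q1 q2 q3)%:R.

Lemma collapse_core (T : finType) (F : gT -> gT -> T) (d : gT -> gT -> R) (G : T -> R) :
  \sum_x (\sum_(u in Gp) \sum_(v in Gp) d u v * (x == F u v)%:R) * G x =
  \sum_(u in Gp) \sum_(v in Gp) d u v * G (F u v).
Proof.
under eq_bigr => x _ do rewrite big_distrl.
rewrite exchange_big; apply: eq_bigr => u _ /=.
under eq_bigr => x _ do rewrite big_distrl.
rewrite exchange_big; apply: eq_bigr => v _ /=.
under eq_bigr => x _ do rewrite -mulrA [_ * G x]mulrC mulrA.
by rewrite sum_delta.
Qed.

Variables (c : gT -> gT -> R) (X Y : gT -> gT -> gT).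
Hypothesis HX : forall u v, u \in Gp -> v \in Gp -> X u v \in Gm.
Hypothesis HY : forall u v, u \in Gp -> v \in Gp -> Y u v \in Gm.

Lemma collapse_pair (G : gT * gT -> R) :
  \sum_x Mono c X Y x * G x =
  \sum_(u in Gp) \sum_(v in Gp) c u v * G ((u * X u v)%g, (v * Y u v)%g).
Proof.
under eq_bigr => x _ do rewrite ffunE.
exact: (collapse_core (fun u v => ((u * X u v)%g, (v * Y u v)%g))).
Qed.

Lemma collapse_snd k0 (G : gT -> R) :
  \sum_a Mono c X Y (k0, a) * G a =
  \sum_(u in Gp) \sum_(v in Gp) c u v * (k0 == (u * X u v)%g)%:R * G (v * Y u v)%g.
Proof.
transitivity (\sum_(u in Gp) \sum_(v in Gp) (c u v * (k0 == (u * X u v)%g)%:R) * G (v * Y u v)%g); last first.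
  by apply: eq_bigr => u _; apply: eq_bigr => v _.
rewrite -(collapse_core (fun u v => (v * Y u v)%g) (fun u v => c u v * (k0 == (u * X u v)%g)%:R) G) /=.
apply: eq_bigr => a _; rewrite ffunE; congr (_ * _); apply: eq_bigr => u _; apply: eq_bigr => v _.
by rewrite natr_pair /= mulrA.
Qed.

Lemma collapse_fst k0 (G : gT -> R) :
  \sum_a Mono c X Y (a, k0) * G a =
  \sum_(u in Gp) \sum_(v in Gp) c u v * (k0 == (v * Y u v)%g)%:R * G (u * X u v)%g.
Proof.
rewrite -(collapse_core (fun u v => (u * X u v)%g) (fun u v => c u v * (k0 == (v * Y u v)%g)%:R) G) /=.
apply: eq_bigr => a _; rewrite ffunE; congr (_ * _); apply: eq_bigr => u _; apply: eq_bigr => v _.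
rewrite natr_pair /=; ring.
Qed.

Lemma Delta_Mono k : Delta_id Gp Gm (Mono c X Y) k =
  NF (fun w h v => c (w * h)%g v)
     (fun w h v => (((w * lactPM Gp Gm h (X (w * h)%g v))%g, (h * X (w * h)%g v)%g),
                    (v * Y (w * h)%g v)%g)) k.
Proof.
rewrite ffunE.
under eq_bigr => x _ do rewrite -mulrA.
rewrite collapse_pair /=.
transitivity (\sum_(u in Gp) \sum_(v in Gp) \sum_(h in Gp) c u v *
  (k == (((u * h^-1 * lactPM Gp Gm h (X u v))%g, (h * X u v)%g), (v * Y u v)%g))%:R).
  apply: eq_bigr => u Hu; apply: eq_bigr => v Hv.
  rewrite /dcoef fplusM ?fminusM ?HX // big_distrl big_distrr /=; apply: eq_bigr => h _.
  by rewrite !natr_pair /= [(v * _)%g == _]eq_sym.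
under eq_bigr => u _ do rewrite exchange_big /=.
rewrite exchange_big /= /NF [RHS]exchange_big /=.
apply: eq_bigr => h Hh.
rewrite [LHS](reindex_inj (mulIg h)) /=.
apply: eq_big => [w|w _]; first by rewrite groupMr.
by apply: eq_bigr => v _; rewrite mulgK.
Qed.

Lemma idDelta_Mono k : id_Delta Gp Gm (Mono c X Y) k =
  NF (fun u w h => c u (w * h)%g)
     (fun u w h => (((u * X u (w * h)%g)%g, (w * lactPM Gp Gm h (Y u (w * h)%g))%g),
                    (h * Y u (w * h)%g)%g)) k.
Proof.
rewrite ffunE.
under eq_bigr => x _ do rewrite -mulrA.
rewrite collapse_pair /=.
transitivity (\sum_(u in Gp) \sum_(v in Gp) \sum_(h in Gp) c u v *
  (k == (((u * X u v)%g, (v * h^-1 * lactPM Gp Gm h (Y u v))%g), (h * Y u v)%g))%:R).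
  apply: eq_bigr => u Hu; apply: eq_bigr => v Hv.
  rewrite /dcoef fplusM ?fminusM ?HY // !big_distrr /=; apply: eq_bigr => h _.
  rewrite ?natr_and ?natr_pair /= [(u * _)%g == _]eq_sym; ring.
rewrite /NF; apply: eq_bigr => u Hu.
rewrite exchange_big /= [RHS]exchange_big /=.
apply: eq_bigr => h Hh.
rewrite [LHS](reindex_inj (mulIg h)) /=.
apply: eq_big => [w|w _]; first by rewrite groupMr.
by rewrite mulgK.
Qed.

Lemma Mono13_23 k : mul3 Gp Gm (leg13 Gp (Mono c X Y)) (leg23 Gp (Mono c X Y)) k =
  NF (fun u u' v => c u v * c u' (bplus Gp Gm (v * Y u v)%g))
     (fun u u' v => (((u * X u v)%g, (u' * X u' (bplus Gp Gm (v * Y u v)%g))%g),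
                    (v * Y u v * Y u' (bplus Gp Gm (v * Y u v)%g))%g)) k.
Proof.
rewrite mul3_13_23 //.
under eq_bigr => a _ do (under eq_bigr => b _ do rewrite -mulrA; rewrite -big_distrr /=).
under eq_bigr => a _ do rewrite collapse_snd.
rewrite collapse_snd.
transitivity (\sum_(u in Gp) \sum_(v in Gp) \sum_(u' in Gp)
  c u v * c u' (bplus Gp Gm (v * Y u v)%g) *
  (k == (((u * X u v)%g, (u' * X u' (bplus Gp Gm (v * Y u v)%g))%g),
                    (v * Y u v * Y u' (bplus Gp Gm (v * Y u v)%g))%g))%:R).
  apply: eq_bigr => u Hu; apply: eq_bigr => v Hv.
  rewrite big_distrr; apply: eq_bigr => u' Hu' /=; rewrite big_distrr /=.
  set t := bplus Gp Gm (v * Y u v)%g.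
  rewrite (eq_bigr (fun v' => (c u v * (k.1.1 == (u * X u v)%g)%:R *
     (c u' v' * (k.1.2 == (u' * X u' v')%g)%:R * (k.2 == (v * Y u v * Y u' v')%g)%:R))
     * (v' == t)%:R)); last first.
    move=> v' Hv'; rewrite /bmul fplusM ?fminusM ?HY // natr_and.
    rewrite [bplus _ _ _ == _]eq_sym [_ == k.2]eq_sym /t; ring.
  rewrite sum_delta_in ?bplusG // !natr_pair /=; ring.
rewrite /NF; apply: eq_bigr => u Hu.
by rewrite exchange_big.
Qed.

Lemma Mono13_12 k : mul3 Gp Gm (leg13 Gp (Mono c X Y)) (leg12 Gp (Mono c X Y)) k =
  NF (fun u w h => c u h * c (bplus Gp Gm (u * X u h)%g) w)
     (fun u w h => (((u * X u h * X (bplus Gp Gm (u * X u h)%g) w)%g,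
                     (w * Y (bplus Gp Gm (u * X u h)%g) w)%g),
                    (h * Y u h)%g)) k.
Proof.
rewrite mul3_13_12 //.
under eq_bigr => a _ do (under eq_bigr => b _ do rewrite -mulrA; rewrite -big_distrr /=).
under eq_bigr => a _ do rewrite collapse_fst.
rewrite collapse_fst.
transitivity (\sum_(u in Gp) \sum_(h in Gp) \sum_(w in Gp)
  c u h * c (bplus Gp Gm (u * X u h)%g) w *
  (k == (((u * X u h * X (bplus Gp Gm (u * X u h)%g) w)%g,
                     (w * Y (bplus Gp Gm (u * X u h)%g) w)%g),
                    (h * Y u h)%g))%:R).
  apply: eq_bigr => u Hu; apply: eq_bigr => v Hv.
  rewrite big_distrr /=; under eq_bigr => u2 _ do rewrite big_distrr.
  rewrite exchange_big /=; apply: eq_bigr => w Hw /=.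
  set t := bplus Gp Gm (u * X u v)%g.
  rewrite (eq_bigr (fun u2 => (c u v * (k.2 == (v * Y u v)%g)%:R *
     (c u2 w * (k.1.2 == (w * Y u2 w)%g)%:R * (k.1.1 == (u * X u v * X u2 w)%g)%:R))
     * (u2 == t)%:R)); last first.
    move=> u2 Hu2; rewrite /bmul fplusM ?fminusM ?HX // natr_and.
    rewrite [bplus _ _ _ == _]eq_sym [_ == k.1.1]eq_sym /t; ring.
  rewrite sum_delta_in ?bplusG // !natr_pair /=; ring.
rewrite /NF; apply: eq_bigr => u Hu.
by rewrite exchange_big.
Qed.

End Mono.


Section NFs.
Variables (gT : finGroupType) (Gp Gm : {group gT}) (R : realType).
Hypothesis UF : uniq_fact Gp Gm.
Local Hint Resolve fplusG fminusG bplusG bminusG groupVr group1 : core.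

Definition src3 (k : gT * gT * gT) :=
  (fplus Gp Gm k.1.1, fplus Gp Gm k.1.2, fplus Gp Gm k.2).

Definition srcok (f : gT -> gT -> gT -> gT * gT * gT) :=
  forall p1 p2 p3, p1 \in Gp -> p2 \in Gp -> p3 \in Gp -> src3 (f p1 p2 p3) = (p1, p2, p3).

Lemma NF_at (a : gT -> gT -> gT -> R) f k q1 q2 q3 :
  srcok f -> q1 \in Gp -> q2 \in Gp -> q3 \in Gp -> src3 k = (q1, q2, q3) ->
  NF Gp a f k = a q1 q2 q3 * (k == f q1 q2 q3)%:R.
Proof.
move=> Hf H1 H2 H3 Hk.
have Z : forall p1 p2 p3, p1 \in Gp -> p2 \in Gp -> p3 \in Gp -> k = f p1 p2 p3 ->
   (p1, p2, p3) = (q1, q2, q3) by move=> p1 p2 p3 P1 P2 P3 E; rewrite -Hk E Hf.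
rewrite /NF (bigD1 q1) //= [X in _ + X]big1 ?addr0; last first.
  move=> p1 /andP[P1 ne]; apply: big1 => p2 P2; apply: big1 => p3 P3.
  case: eqP => [E|]; last by rewrite mulr0.
  by move: (congr1 (fun p => p.1.1) (Z _ _ _ P1 P2 P3 E)) => /= e; rewrite e eqxx in ne.
rewrite (bigD1 q2) //= [X in _ + X]big1 ?addr0; last first.
  move=> p2 /andP[P2 ne]; apply: big1 => p3 P3.
  case: eqP => [E|]; last by rewrite mulr0.
  by move: (congr1 (fun p => p.1.2) (Z _ _ _ H1 P2 P3 E)) => /= e; rewrite e eqxx in ne.
rewrite (bigD1 q3) //= [X in _ + X]big1 ?addr0 //.
move=> p3 /andP[P3 ne].
case: eqP => [E|]; last by rewrite mulr0.
by move: (congr1 (fun p => p.2) (Z _ _ _ H1 H2 P3 E)) => /= e; rewrite e eqxx in ne.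
Qed.

Lemma NF_inj (a b : gT -> gT -> gT -> R) f g :
  srcok f -> srcok g -> (forall k, NF Gp a f k = NF Gp b g k) ->
  forall q1 q2 q3, q1 \in Gp -> q2 \in Gp -> q3 \in Gp -> 0 < a q1 q2 q3 ->
  f q1 q2 q3 = g q1 q2 q3 /\ a q1 q2 q3 = b q1 q2 q3.
Proof.
move=> Hf Hg E q1 q2 q3 H1 H2 H3 Ha.
have := E (f q1 q2 q3).
rewrite (NF_at _ Hf H1 H2 H3 (Hf _ _ _ H1 H2 H3)) eqxx mulr1.
rewrite (NF_at _ Hg H1 H2 H3 (Hf _ _ _ H1 H2 H3)).
case: eqP => [-> ->|_]; first by rewrite mulr1.
by rewrite mulr0 => E0; rewrite E0 ltxx in Ha.
Qed.

End NFs.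


Section Dir1.
Variables (gT : finGroupType) (Gp Gm : {group gT}) (R : realType).
Hypothesis UF : uniq_fact Gp Gm.
Local Hint Resolve fplusG fminusG bplusG bminusG groupVr group1 : core.

Lemma direction1 (xi eta : {morphism Gp >-> gT}) (r : gT -> gT -> R) :
  (xi @* Gp \subset Gm)%g -> (eta @* Gp \subset Gm)%g ->
  compat Gp Gm xi eta r ->
  let Rm := Rform Gp Gm xi eta r in
  Delta_id Gp Gm Rm = mul3 Gp Gm (leg13 Gp Rm) (leg23 Gp Rm) /\
  id_Delta Gp Gm Rm = mul3 Gp Gm (leg13 Gp Rm) (leg12 Gp Rm).
Proof.
move=> Hxi Heta Hc /=.
have xiG u : u \in Gp -> xi u \in Gm.
  by move=> Hu; apply: (subsetP Hxi); apply: mem_morphim.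
have etaG u : u \in Gp -> eta u \in Gm.
  by move=> Hu; apply: (subsetP Heta); apply: mem_morphim.
set X := fun u v => ((ractPM Gp Gm (eta v) u)^-1)%g.
set Y := fun u v : gT => xi u.
have HX : forall u v, u \in Gp -> v \in Gp -> X u v \in Gm.
  by move=> u v _ _; rewrite /X groupV fminusG.
have HY : forall u v, u \in Gp -> v \in Gp -> Y u v \in Gm.
  by move=> u v Hu _; rewrite /Y xiG.
have -> : Rform Gp Gm xi eta r = Mono Gp r X Y by [].
split; apply/ffunP => k.
  rewrite Delta_Mono // Mono13_23 // /NF.
  apply: eq_bigr => w Hw; apply: eq_bigr => h Hh; apply: eq_bigr => v Hv.
  have [c1 c2 c3 c4] := Hc w v h Hw Hv Hh.
  rewrite /ractMP in c2 c3.
  congr (_ * _); first by rewrite /Y c3.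
  congr (_%:R); congr (_ == _).
  rewrite /X /Y ractPM_mul ?etaG // lact_ract_inv ?etaG ?fminusG // -c2.
  by rewrite morphM // mulgA.
rewrite idDelta_Mono // Mono13_12 // /NF.
apply: eq_bigr => u Hu; apply: eq_bigr => w Hw; apply: eq_bigr => h Hh.
have [c1 c2 c3 c4] := Hc u h w Hu Hh Hw.
congr (_ * _); first by rewrite c4 /X bplus_ract ?etaG.
congr (_%:R); congr (_ == _).
rewrite /X /Y bplus_ract ?etaG // morphM // ractPM_mulm ?etaG //.
by rewrite invMg mulgA c1.
Qed.

End Dir1.


Section Ext.
Variables (gT : finGroupType) (Gp Gm : {group gT}) (R : realType).
Hypothesis UF : uniq_fact Gp Gm.
Local Hint Resolve fplusG fminusG bplusG bminusG groupVr group1 : core.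

Definition s2 (x : gT * gT) := (fplus Gp Gm x.1, fplus Gp Gm x.2).

Lemma term_le (F : gT * gT -> gT * gT -> R) x0 y0 :
  (forall x y, 0 <= F x y) -> F x0 y0 <= \sum_x \sum_y F x y.
Proof.
move=> H; rewrite (bigD1 x0) //=; apply: ler_wpDr.
  by apply: sumr_ge0 => x _; apply: sumr_ge0.
rewrite (bigD1 y0) //=; apply: ler_wpDr => //.
by apply: sumr_ge0.
Qed.

Variables (A B : H2 gT R).
Hypotheses (HA : positive2 A) (HB : positive2 B).

Lemma exists_term : mul2 Gp Gm A B = one2 R Gp ->
  forall o : gT * gT, o.1 \in Gp -> o.2 \in Gp ->
  exists x y, [/\ 0 < A x, 0 < B y, bmul Gp Gm x.1 y.1 o.1 & bmul Gp Gm x.2 y.2 o.2].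
Proof.
move=> HAB o H1 H2.
have : mul2 Gp Gm A B o = 1 by rewrite HAB ffunE H1 H2.
rewrite ffunE.
case: (boolP [exists x, exists y, [&& 0 < A x, 0 < B y, bmul Gp Gm x.1 y.1 o.1 &
          bmul Gp Gm x.2 y.2 o.2]]) => [/existsP[x /existsP[y /and4P[]]]|Hn].
  by move=> *; exists x, y.
rewrite big1; first by move/eqP; rewrite eq_sym oner_eq0.
move=> x _.
apply: big1 => y _.
move: Hn; rewrite negb_exists => /forallP/(_ x); rewrite negb_exists => /forallP/(_ y).
case Hb: (bmul Gp Gm x.1 y.1 o.1 && bmul Gp Gm x.2 y.2 o.2); last by rewrite mulr0.
rewrite andbT => /nandP[] HH.
  have -> : A x = 0 by apply/eqP; move: (HA x); rewrite le_eqVlt (negbTE HH) orbF eq_sym.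
  by rewrite !mul0r.
have -> : B y = 0 by apply/eqP; move: (HB y); rewrite le_eqVlt (negbTE HH) orbF eq_sym.
by rewrite mulr0 mul0r.
Qed.

Lemma comp_pos : mul2 Gp Gm A B = one2 R Gp -> forall x y,
  0 < A x -> 0 < B y -> bplus Gp Gm x.1 = fplus Gp Gm y.1 ->
  bplus Gp Gm x.2 = fplus Gp Gm y.2 ->
  ((x.1 * fminus Gp Gm y.1)%g \in Gp) && ((x.2 * fminus Gp Gm y.2)%g \in Gp).
Proof.
move=> HAB x y Ax By e1 e2.
set z := ((x.1 * fminus Gp Gm y.1)%g, (x.2 * fminus Gp Gm y.2)%g).
have : 0 < mul2 Gp Gm A B z.
  rewrite ffunE.
  have T := @term_le (fun x0 y0 => A x0 * B y0 * ((bmul Gp Gm x0.1 y0.1 z.1) && (bmul Gp Gm x0.2 y0.2 z.2))%:R) x y.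
  apply: (lt_le_trans _ (T _)).
    by rewrite /bmul e1 e2 !eqxx /= mulr1 mulr_gt0.
  by move=> x' y'; rewrite !mulr_ge0 ?ler0n.
by rewrite HAB ffunE ltr0n /z; case: (_ && _).
Qed.

Lemma exists_src : mul2 Gp Gm A B = one2 R Gp ->
  forall s : gT * gT, s.1 \in Gp -> s.2 \in Gp -> exists g, 0 < A g /\ s2 g = s.
Proof.
move=> HAB s H1 H2.
have [x [y [Ax _ /andP[_ /eqP e1] /andP[_ /eqP e2]]]] := exists_term HAB H1 H2.
exists x; split => //.
rewrite /s2 -(fplus_mulm UF x.1 (fminusG UF y.1)) e1 fplusE //.
rewrite -(fplus_mulm UF x.2 (fminusG UF y.2)) e2 fplusE //.
by case: s H1 H2 e1 e2.
Qed.

End Ext.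

Section Ext2.
Variables (gT : finGroupType) (Gp Gm : {group gT}) (R : realType).
Hypothesis UF : uniq_fact Gp Gm.
Local Hint Resolve fplusG fminusG bplusG bminusG groupVr group1 : core.
Variables (A B : H2 gT R).
Hypotheses (HA : positive2 A) (HB : positive2 B).
Hypotheses (HAB : mul2 Gp Gm A B = one2 R Gp) (HBA : mul2 Gp Gm B A = one2 R Gp).

Lemma uniq_src g1 g2 : 0 < A g1 -> 0 < A g2 -> s2 Gp Gm g1 = s2 Gp Gm g2 -> g1 = g2.
Proof.
move=> A1 A2 E.
have [d [Bd sd]] := exists_src UF HB HA HBA (s := (bplus Gp Gm g1.1, bplus Gp Gm g1.2))
   (bplusG UF _) (bplusG UF _).
have sd1 : fplus Gp Gm d.1 = bplus Gp Gm g1.1 by rewrite -[LHS]/((s2 Gp Gm d).1) sd.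
have sd2 : fplus Gp Gm d.2 = bplus Gp Gm g1.2 by rewrite -[LHS]/((s2 Gp Gm d).2) sd.
have E1 : fplus Gp Gm g1.1 = fplus Gp Gm g2.1 by rewrite -[LHS]/((s2 Gp Gm g1).1) E.
have E2 : fplus Gp Gm g1.2 = fplus Gp Gm g2.2 by rewrite -[LHS]/((s2 Gp Gm g1).2) E.
have /andP[p1 p2] := comp_pos HA HB HAB A1 Bd (esym sd1) (esym sd2).
have m1 := comp_id UF p1; have m2 := comp_id UF p2.
have bd1 : bplus Gp Gm d.1 = fplus Gp Gm g2.1.
  by rewrite -E1 -(bplus_inv UF g1.1) -sd1 -m1 fdec.
have bd2 : bplus Gp Gm d.2 = fplus Gp Gm g2.2.
  by rewrite -E2 -(bplus_inv UF g1.2) -sd2 -m2 fdec.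
have /andP[q1 q2] := comp_pos HB HA HBA Bd A2 bd1 bd2.
have n1 := comp_id UF q1; have n2 := comp_id UF q2.
case: g1 g2 A1 A2 E E1 E2 m1 m2 n1 n2 {sd sd1 sd2 p1 p2 bd1 bd2 q1 q2} =>
  [a1 a2] [b1 b2] /= _ _ _ E1 E2 m1 m2 n1 n2.
by rewrite -(fdec Gp Gm a1) -(fdec Gp Gm a2) -(fdec Gp Gm b1) -(fdec Gp Gm b2) E1 E2 n1 n2 m1 m2 !invgK.
Qed.

Definition gam (u v : gT) : gT * gT :=
  odflt (1, 1)%g [pick x | (0 < A x) && (s2 Gp Gm x == (u, v))].

Lemma gam_spec u v : u \in Gp -> v \in Gp ->
  0 < A (gam u v) /\ s2 Gp Gm (gam u v) = (u, v).
Proof.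
move=> Hu Hv; rewrite /gam; case: pickP => [x /andP[h /eqP e] | Hn] //.
have [g [h e]] := exists_src UF HA HB HAB (s := (u, v)) Hu Hv.
by have := Hn g; rewrite h e eqxx.
Qed.

Definition cA u v := A (gam u v).
Definition XA u v := fminus Gp Gm (gam u v).1.
Definition YA u v := fminus Gp Gm (gam u v).2.

Lemma gamE u v : u \in Gp -> v \in Gp ->
  ((u * XA u v)%g, (v * YA u v)%g) = gam u v.
Proof.
move=> Hu Hv; have [_ e] := gam_spec Hu Hv.
have e1 : fplus Gp Gm (gam u v).1 = u by rewrite -[LHS]/((s2 Gp Gm (gam u v)).1) e.
have e2 : fplus Gp Gm (gam u v).2 = v by rewrite -[LHS]/((s2 Gp Gm (gam u v)).2) e.
rewrite /XA /YA; case: (gam u v) e1 e2 => g1 g2 /= e1 e2.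
by rewrite -e1 -e2 !fdec.
Qed.

Lemma A_Mono : A = Mono Gp cA XA YA.
Proof.
apply/ffunP => k; rewrite ffunE; symmetry.
transitivity (\sum_(u in Gp) \sum_(v in Gp) A k * (k == gam u v)%:R).
  apply: eq_bigr => u Hu; apply: eq_bigr => v Hv.
  rewrite gamE // /cA; case: eqP => [->|] //.
  by rewrite !mulr0.
case: (eqVneq (A k) 0) => [A0|An].
  by rewrite A0 big1 // => u _; rewrite big1 // => v _; rewrite mul0r.
have Ak : 0 < A k by rewrite lt0r An HA.
have H1 : fplus Gp Gm k.1 \in Gp by exact: fplusG.
have H2 : fplus Gp Gm k.2 \in Gp by exact: fplusG.
have gk : gam (fplus Gp Gm k.1) (fplus Gp Gm k.2) = k.
  have [A1 e1] := gam_spec H1 H2.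
  by apply: uniq_src => //; rewrite e1.
transitivity (\sum_(u in Gp) \sum_(v in Gp)
   (A k * (u == fplus Gp Gm k.1)%:R) * (v == fplus Gp Gm k.2)%:R).
  apply: eq_bigr => u Hu; apply: eq_bigr => v Hv.
  have -> : (k == gam u v) = (u == fplus Gp Gm k.1) && (v == fplus Gp Gm k.2); last first.
    by rewrite natr_and mulrA.
  apply/idP/andP => [/eqP E|[/eqP eu /eqP ev]].
    have [_ e] := gam_spec Hu Hv.
    have e1 : fplus Gp Gm (gam u v).1 = u by rewrite -[LHS]/((s2 Gp Gm (gam u v)).1) e.
    have e2 : fplus Gp Gm (gam u v).2 = v by rewrite -[LHS]/((s2 Gp Gm (gam u v)).2) e.
    by rewrite E e1 e2 !eqxx.
  by apply/eqP; rewrite eu ev gk.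
under eq_bigr => u Hu do rewrite sum_delta_in //.
by rewrite sum_delta_in.
Qed.

End Ext2.


Section Dir2.
Variables (gT : finGroupType) (Gp Gm : {group gT}) (R : realType).
Hypothesis UF : uniq_fact Gp Gm.
Local Hint Resolve fplusG fminusG bplusG bminusG groupVr group1 : core.

Lemma direction2 (A : H2 gT R) :
  positive2 A ->
  (exists B : H2 gT R, positive2 B /\
     mul2 Gp Gm A B = one2 R Gp /\ mul2 Gp Gm B A = one2 R Gp) ->
  Delta_id Gp Gm A = mul3 Gp Gm (leg13 Gp A) (leg23 Gp A) ->
  id_Delta Gp Gm A = mul3 Gp Gm (leg13 Gp A) (leg12 Gp A) ->
  exists (xi eta : {morphism Gp >-> gT}) (r : gT -> gT -> R),
    [/\ (xi @* Gp \subset Gm)%g, (eta @* Gp \subset Gm)%g,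
        (forall u v, u \in Gp -> v \in Gp -> 0 < r u v),
        compat Gp Gm xi eta r &
        A = Rform Gp Gm xi eta r].
Proof.
move=> HA [B [HB [HAB HBA]]] hD hI.
have AM := A_Mono UF HA HB HAB HBA.
set c := cA Gp Gm A in AM; set X := XA Gp Gm A in AM; set Y := YA Gp Gm A in AM.
have cpos u v : u \in Gp -> v \in Gp -> 0 < c u v.
  by move=> Hu Hv; have [] := gam_spec UF HA HB HAB Hu Hv.
have HX u v : u \in Gp -> v \in Gp -> (X u v \in Gm)%g by move=> _ _; exact: fminusG.
have HY u v : u \in Gp -> v \in Gp -> (Y u v \in Gm)%g by move=> _ _; exact: fminusG.
rewrite AM in hD hI.
have ED (k : gT * gT * gT) := congr1 (fun F : H3 gT R => F k) hD.
have EI (k : gT * gT * gT) := congr1 (fun F : H3 gT R => F k) hI.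
rewrite /= in ED EI.
have {}ED k : _ := etrans (esym (Delta_Mono UF c Y HX k)) (etrans (ED k) (Mono13_23 UF c X HY k)).
have {}EI k : _ := etrans (esym (idDelta_Mono UF c X HY k)) (etrans (EI k) (Mono13_12 UF c Y HX k)).
have HX' u v : (X u v \in Gm)%g by exact: fminusG.
have HY' u v : (Y u v \in Gm)%g by exact: fminusG.
have ND := NF_inj _ _ ED.
have {}ND := ND Gm ltac:(by move=> p1 p2 p3 H1 H2 H3; rewrite /src3 /= (fplusM UF H1 (bminusG UF _)) (fplusM UF H2 (HX' _ _)) (fplusM UF H3 (HY' _ _)))
   ltac:(by move=> p1 p2 p3 H1 H2 H3; rewrite /src3 /= -mulgA (fplusM UF H1 (HX' _ _)) (fplusM UF H2 (HX' _ _)) (fplusM UF H3 (groupM (HY' _ _) (HY' _ _)))).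
have NI := NF_inj _ _ EI.
have {}NI := NI Gm ltac:(by move=> p1 p2 p3 H1 H2 H3; rewrite /src3 /= (fplusM UF H1 (HX' _ _)) (fplusM UF H2 (bminusG UF _)) (fplusM UF H3 (HY' _ _)))
   ltac:(by move=> p1 p2 p3 H1 H2 H3; rewrite /src3 /= -mulgA (fplusM UF H1 (groupM (HX' _ _) (HX' _ _))) (fplusM UF H2 (HY' _ _)) (fplusM UF H3 (HY' _ _))).
have D w h v : w \in Gp -> h \in Gp -> v \in Gp ->
  [/\ lactPM Gp Gm h (X (w * h)%g v) = X w v,
      X (w * h)%g v = X h (bplus Gp Gm (v * Y w v)),
      Y (w * h)%g v = (Y w v * Y h (bplus Gp Gm (v * Y w v)))%g &
      c (w * h)%g v = c w v * c h (bplus Gp Gm (v * Y w v))].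
  move=> Hw Hh Hv; have [e ->] := ND w h v Hw Hh Hv (cpos _ _ (groupM Hw Hh) Hv).
  have e1 := congr1 (fun p => p.1.1) e; have e2 := congr1 (fun p => p.1.2) e.
  have e3 := congr1 (fun p => p.2) e.
  rewrite /= in e1 e2 e3; rewrite -mulgA in e3.
  split => //; [exact: (mulgI w) | exact: (mulgI h) | exact: (mulgI v)].
have F u w h : u \in Gp -> w \in Gp -> h \in Gp ->
  [/\ X u (w * h)%g = (X u h * X (bplus Gp Gm (u * X u h)) w)%g,
      lactPM Gp Gm h (Y u (w * h)%g) = Y (bplus Gp Gm (u * X u h)) w,
      Y u (w * h)%g = Y u h &
      c u (w * h)%g = c u h * c (bplus Gp Gm (u * X u h)) w].
  move=> Hu Hw Hh; have [e ->] := NI u w h Hu Hw Hh (cpos _ _ Hu (groupM Hw Hh)).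
  have e1 := congr1 (fun p => p.1.1) e; have e2 := congr1 (fun p => p.1.2) e.
  have e3 := congr1 (fun p => p.2) e.
  rewrite /= in e1 e2 e3; rewrite -mulgA in e1.
  split => //; [exact: (mulgI u) | exact: (mulgI w) | exact: (mulgI h)].
pose xif u := Y u 1%g.
pose etaf v := ((X 1%g v)^-1)%g.
have YE u v : u \in Gp -> v \in Gp -> Y u v = xif u.
  by move=> Hu Hv; have [_ _ e _] := F u v 1%g Hu Hv (group1 _); rewrite mulg1 in e.
have XE h v : h \in Gp -> v \in Gp -> X h v = ((ractPM Gp Gm (etaf v) h)^-1)%g.
  move=> Hh Hv; have [e1 _ _ _] := D 1%g h v (group1 _) Hh Hv.
  rewrite mul1g in e1.
  by rewrite /etaf -e1 ract_lact_inv ?HX' // invgK.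
have xiM : {in Gp &, {morph xif : x y / (x * y)%g}}.
  move=> w h Hw Hh /=; have [_ _ e3 _] := D w h 1%g Hw Hh (group1 _).
  by rewrite /xif e3 (YE h (bplus Gp Gm (1 * Y w 1%g)%g)) ?bplusG.
have etaM : {in Gp &, {morph etaf : x y / (x * y)%g}}.
  move=> w h Hw Hh /=; have [e1 _ _ _] := F 1%g w h (group1 _) Hw Hh.
  rewrite mul1g (bplusEm UF (HX' _ _)) in e1.
  by rewrite /etaf e1 invMg.
pose xi := Morphism xiM.
pose eta := Morphism etaM.
exists xi, eta, c.
have etaG v : (etaf v \in Gm)%g by rewrite groupV.
have tE u v : u \in Gp -> v \in Gp -> bplus Gp Gm (u * X u v)%g = lactMP Gp Gm (etaf v) u.
  by move=> Hu Hv; rewrite XE // bplus_ract.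
split.
- apply/subsetP => y /morphimP[x Hx _ ->]; exact: HY'.
- by apply/subsetP => y /morphimP[x Hx _ ->]; rewrite /= groupV.
- exact: cpos.
- move=> u v w Hu Hv Hw; rewrite /xi /eta /=; split.
  + have [_ e2 _ _] := F u 1%g v Hu (group1 _) Hv; rewrite mul1g in e2.
    by rewrite -tE // -(YE u v).
  + have [_ e2 _ _] := D u 1%g v Hu (group1 _) Hv; rewrite mulg1 in e2.
    by rewrite /ractMP -(YE u v) // {2}/etaf -e2 (XE u v) // invgK.
  + have [_ _ _ e4] := D u w v Hu Hw Hv.
    by rewrite /ractMP -(YE u v).
  + have [_ _ _ e4] := F u w v Hu Hw Hv.
    by rewrite e4 tE.
- rewrite AM; apply/ffunP => k; rewrite !ffunE.
  apply: eq_bigr => u Hu; apply: eq_bigr => v Hv.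
  by rewrite XE // YE.
Qed.

End Dir2.


Unset Implicit Arguments.

Theorem proposition3 (gT : finGroupType) (Gp Gm : {group gT}) (R : realType) :
  uniq_fact Gp Gm ->
  (forall (xi eta : {morphism Gp >-> gT}) (r : gT -> gT -> R),
     (xi @* Gp \subset Gm)%g -> (eta @* Gp \subset Gm)%g ->
     (forall u v, u \in Gp -> v \in Gp -> 0 < r u v) ->
     compat Gp Gm xi eta r ->
     let Rm := Rform Gp Gm xi eta r in
     Delta_id Gp Gm Rm = mul3 Gp Gm (leg13 Gp Rm) (leg23 Gp Rm) /\
     id_Delta Gp Gm Rm = mul3 Gp Gm (leg13 Gp Rm) (leg12 Gp Rm))
  /\
  (forall A : H2 gT R,
     positive2 A ->
     (exists B : H2 gT R, positive2 B /\
        mul2 Gp Gm A B = one2 R Gp /\ mul2 Gp Gm B A = one2 R Gp) ->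
     Delta_id Gp Gm A = mul3 Gp Gm (leg13 Gp A) (leg23 Gp A) ->
     id_Delta Gp Gm A = mul3 Gp Gm (leg13 Gp A) (leg12 Gp A) ->
     exists (xi eta : {morphism Gp >-> gT}) (r : gT -> gT -> R),
       [/\ (xi @* Gp \subset Gm)%g, (eta @* Gp \subset Gm)%g,
           (forall u v, u \in Gp -> v \in Gp -> 0 < r u v),
           compat Gp Gm xi eta r &
           A = Rform Gp Gm xi eta r]).
Proof.
move=> UF; split.
  move=> xi eta r Hxi Heta _ Hc; exact: (direction1 UF Hxi Heta Hc).
move=> A HA HB hD hI; exact: (direction2 UF HA HB hD hI).
Qed.
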